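(* The PBW basis of the commutative operad $\operatorname{Com}$ obtained (by taking the elements represented by increasing chains) from the CL-labelling of the partition posets which labels the edge between $(A_1,\dots,A_p)$ and the partition obtained by merging $A_i$ and $A_j$ by $\max(\min A_i,\min A_j)$ is the basis consisting of the binary left combs whose leaves are labelled from left to right by $1,\dots,n$.
   Context: $\operatorname{Com}$ is the operad of commutative associative algebras, generated by one symmetric binary operation $\mu$; its operadic partition posets are the posets of set partitions of $\{1,\dots,n\}$ ordered by refinement. The maximal chains of these posets correspond to levelled binary trees (one merge per level), and the associated PBW basis consists of the elements of $\operatorname{Com}$ (written as shuffle trees in $\mu$) represented by the unique strictly increasing (lexicographically minimal) maximal chains for the labelling. A binary left comb is the tree $(\cdots((x_1\mu x_2)\mu x_3)\cdots)\mu x_n$. *)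

(* Defs.v *)
From mathcomp Require Import all_boot.
Set Implicit Arguments. Unset Strict Implicit. Unset Printing Implicit Defensive.

(* Shuffle trees in the single binary generator mu of Com:
   leaves labelled by natural numbers, Node l r = (l mu r). *)
Inductive tree : Type := Leaf of nat | Node of tree & tree.

Fixpoint leftcomb (k : nat) : tree :=
  match k with
  | 0 => Leaf 0 (* unused: arity 0 *)
  | 1 => Leaf 1
  | k'.+1 => Node (leftcomb k') (Leaf k)
  end.

Section Partitions.
Variable n : nat.
(* The ground set {1,...,n} is modelled by 'I_n, element i standing for i+1. *)

Definition minb (B : {set 'I_n}) : nat := (\big[minn/n]_(i in B) val i).+1.

Definition discrete : {set {set 'I_n}} := [set [set i] | i : 'I_n].
Definition coarsest : {set {set 'I_n}} := [set [set: 'I_n]].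

Definition merge_step (P Q : {set {set 'I_n}}) : Prop :=
  exists A B, [/\ A \in P, B \in P, A != B &
                  Q = (A :|: B) |: ((P :\ A) :\ B)].

Definition maximal_chain (c : seq {set {set 'I_n}}) : Prop :=
  [/\ size c = n, nth set0 c 0 = discrete, nth set0 c n.-1 = coarsest &
      forall k, k.+1 < n -> merge_step (nth set0 c k) (nth set0 c k.+1)].

(* The CL-label of the edge P_k < P_{k+1}: the two merged blocks are
   P_k \ P_{k+1}, and the label is max (min A_i, min A_j). *)
Definition edge_label (c : seq {set {set 'I_n}}) (k : nat) : nat :=
  \max_(A in nth set0 c k :\: nth set0 c k.+1) minb A.

Definition increasing_chain (c : seq {set {set 'I_n}}) : Prop :=
  forall k, k.+2 < n -> edge_label c k < edge_label c k.+1.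

(* The shuffle tree attached to block B at level k of the chain c:
   a block of P_0 is a leaf; a block created at step k'->k'+1 by merging
   A1, A2 is (t(A1) mu t(A2)), the child with the smaller minimum on the left. *)
Fixpoint tree_at (c : seq {set {set 'I_n}}) (k : nat) (B : {set 'I_n}) : tree :=
  match k with
  | 0 => Leaf (minb B)
  | k'.+1 =>
      let P := nth set0 c k' in
      if B \in P then tree_at c k' B else
      match enum (P :\: nth set0 c k) with
      | [:: A1; A2] =>
          if minb A1 < minb A2 then Node (tree_at c k' A1) (tree_at c k' A2)
          else Node (tree_at c k' A2) (tree_at c k' A1)
      | _ => Leaf 0
      end
  end.

Definition chain_tree (c : seq {set {set 'I_n}}) : tree :=
  tree_at c n.-1 [set: 'I_n].

Definition pbw_basis (t : tree) : Prop :=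
  exists c, [/\ maximal_chain c, increasing_chain c & chain_tree c = t].

End Partitions.

(* Main.v *)
Require Import Defs.
From mathcomp Require Import all_boot.
From mathcomp Require Import zify.
Set Implicit Arguments. Unset Strict Implicit. Unset Printing Implicit Defensive.

Lemma bigmin_le_seq (I : eqType) (s : seq I) (P : pred I) (F : I -> nat) m j :
  j \in s -> P j -> \big[minn/m]_(i <- s | P i) F i <= F j.
Proof.
elim: s => [//|x s IH]; rewrite inE big_cons => /orP[/eqP<-|js] Pj.
  by rewrite Pj geq_minl.
case: (P x); last exact: IH.
exact: leq_trans (geq_minr _ _) (IH js Pj).
Qed.

Lemma bigmin_le (n : nat) (A : {set 'I_n}) (j : 'I_n) :
  j \in A -> \big[minn/n]_(i in A) val i <= val j.
Proof. by move=> jA; apply: bigmin_le_seq => //; rewrite mem_index_enum. Qed.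

Definition pre n k : {set 'I_n} := [set i : 'I_n | i <= k].
Definition Pk n k : {set {set 'I_n}} := pre n k |: [set [set i] | i : 'I_n & k < i].

Lemma inPkP n k X : reflect (X = pre n k \/ exists2 i : 'I_n, k < i & X = [set i])
  (X \in Pk n k).
Proof.
rewrite /Pk in_setU1; apply: (iffP orP) => [[/eqP->|/imsetP[i]]|[->|[i ki ->]]].
- by left.
- by rewrite inE => ki ->; right; exists i.
- by left.
- by right; apply/imsetP; exists i; rewrite ?inE.
Qed.

Lemma minb1 n (i : 'I_n) : minb [set i] = i.+1.
Proof.
rewrite /minb; congr _.+1; apply/eqP; rewrite eqn_leq bigmin_le ?set11 //=.
apply: (big_rec (fun x => i <= x)); first exact: ltnW.
by move=> j x; rewrite inE => /eqP -> hx; rewrite leq_min leqnn.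
Qed.

Lemma minb_pre n k (hn : 0 < n) : minb (pre n k) = 1.
Proof.
rewrite /minb; congr _.+1; apply/eqP; rewrite -leqn0.
have := bigmin_le (A := pre n k) (j := Ordinal hn); rewrite inE; exact.
Qed.

Lemma minb_le n (X : {set 'I_n}) : X != set0 -> minb X <= n.
Proof. by case/set0Pn => x xX; apply: leq_ltn_trans (bigmin_le xX) (ltn_ord x). Qed.

Lemma diff_merge (T : finType) (P : {set {set T}}) A B :
  A \in P -> B \in P -> A != A :|: B -> B != A :|: B ->
  P :\: ((A :|: B) |: (P :\ A :\ B)) = [set A; B].
Proof.
move=> AP BP hA hB; apply/setP => X; rewrite !inE.
case: (eqVneq X A) => [->|XA]; first by rewrite AP (negbTE hA) /= ?andbF.
case: (eqVneq X B) => [->|XB]; first by rewrite BP (negbTE hB) /= ?andbF ?orbF.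
by case: (X \in P); rewrite ?andbF //= andbT; case: eqP.
Qed.

Lemma max2 n (A B : {set 'I_n}) : A != B ->
  \max_(X in [set A; B]) minb X = maxn (minb A) (minb B).
Proof.
by move=> AB; rewrite big_setU1 ?big_set1 // inE.
Qed.

Lemma enum2 (T : finType) (A B : T) : A != B ->
  enum [set A; B] = [:: A; B] \/ enum [set A; B] = [:: B; A].
Proof.
move=> AB.
have hs : size (enum [set A; B]) = 2 by rewrite -cardE cards2 AB.
have hu := enum_uniq [set A; B].
have hm x : (x \in enum [set A; B]) = (x == A) || (x == B) by rewrite mem_enum !inE.
case e: (enum _) hs hu hm => [|x [|y [|]]] //= _; rewrite inE andbT => xy hm.
have := hm x; have := hm y; rewrite !inE !eqxx /= orbT => /esym hy /esym hx.
case/orP: hx => /eqP ex; case/orP: hy => /eqP ey; subst; rewrite ?eqxx // in xy *.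
  by left. by right.
Qed.
Lemma sub_Pk n k (hn : 0 < n) X Y : X \in Pk n k -> Y \in Pk n k -> Y \subset X -> Y = X.
Proof.
move=> /inPkP hX /inPkP[->|[j kj ->]] /subsetP sub.
  have : Ordinal hn \in X by apply: sub; rewrite inE.
  case: hX => [->//|[i ki ->]]; rewrite inE => /eqP/(congr1 val) /= i0.
  by rewrite -i0 in ki.
have : j \in X by apply: sub; rewrite inE.
case: hX => [->|[i ki ->]]; first by rewrite inE leqNgt kj.
by rewrite inE => /eqP->.
Qed.

Lemma merge_nondeg n k (hn : 0 < n) A B : A \in Pk n k -> B \in Pk n k -> A != B ->
  A != A :|: B.
Proof.
move=> hA hB AB; apply/eqP => e; move/eqP: AB; apply.
apply: esym; apply: sub_Pk hA hB _ => //; rewrite e; exact: subsetUr.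
Qed.

Lemma union_notin n k (hn : 0 < n) A B : A \in Pk n k -> B \in Pk n k -> A != B ->
  A :|: B \notin Pk n k.
Proof.
move=> hA hB AB; apply/negP => hU; case/eqP: AB.
exact: etrans (sub_Pk hn hU hA (subsetUl _ _)) (esym (sub_Pk hn hU hB (subsetUr _ _))).
Qed.

Lemma pre_succ n k (j : 'I_n) : val j = k.+1 -> pre n k :|: [set j] = pre n k.+1.
Proof.
move=> hj; apply/setP => i; rewrite !inE [RHS]leq_eqVlt ltnS orbC; congr (_ || _).
by rewrite -hj.
Qed.

Lemma single_in n k (i : 'I_n) : k < i -> [set i] \in Pk n k.
Proof. by move=> ki; apply/inPkP; right; exists i. Qed.

Lemma pre_in n k : pre n k \in Pk n k.
Proof. by apply/inPkP; left. Qed.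

Lemma pre_neq n k (i : 'I_n) : k < i -> pre n k != [set i].
Proof.
move=> ki; apply/eqP => /setP/(_ i); rewrite !inE eqxx leqNgt ki //.
Qed.

Lemma merge_Pk n k (j : 'I_n) : val j = k.+1 ->
  (pre n k :|: [set j]) |: ((Pk n k :\ pre n k) :\ [set j]) = Pk n k.+1.
Proof.
move=> hj; rewrite pre_succ //; apply/setP => X; rewrite /Pk !in_setU1; congr (_ || _).
rewrite !in_setD1; apply/idP/idP.
  case/and3P => Xj Xp; rewrite in_setU1 (negbTE Xp) /=.
  case/imsetP => i; rewrite inE => ki XE; apply/imsetP; exists i => //.
  rewrite inE ltn_neqAle ki andbT; apply/eqP => ei.
  have ij : i = j by apply: val_inj; rewrite /= hj ei.
  by rewrite XE ij eqxx in Xj.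
case/imsetP => i; rewrite inE => ki ->.
have ne : i != j by apply/eqP => e; rewrite e hj ltnn in ki.
have ne2 : [set i] != pre n k by rewrite eq_sym pre_neq // ltnW.
rewrite ne2 (inj_eq (@set1_inj _)) ne /= in_setU1; apply/orP; right; apply/imsetP; exists i => //.
by rewrite inE ltnW.
Qed.

Lemma Pk0 n (hn : 0 < n) : Pk n 0 = discrete n.
Proof.
apply/setP => X; apply/(@inPkP n 0 X)/imsetP => [[->|[i _ ->]]|[i _ ->]].
- exists (Ordinal hn) => //; apply/setP => i; rewrite !inE leqn0.
  by apply/eqP/eqP => [e|/(congr1 val)//]; apply/val_inj.
- by exists i.
- case: (posnP i) => [i0|ip]; last by right; exists i.
  left; apply/setP => x; rewrite !inE leqn0 -i0.
  by apply/eqP/eqP => [->|/val_inj].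
Qed.

Lemma Pklast n (hn : 0 < n) : Pk n n.-1 = coarsest n.
Proof.
apply/setP => X; rewrite /coarsest in_set1; apply/(@inPkP n n.-1 X)/eqP => [[->|[i ki _]]|->].
- by apply/setP => i; rewrite !inE -ltnS prednK ?ltn_ord.
- by have := ltn_ord i; lia.
- by left; apply/setP => i; rewrite !inE -ltnS prednK ?ltn_ord.
Qed.

Lemma nonempty_chain n (c : seq {set {set 'I_n}}) : maximal_chain c -> forall k, k < n -> set0 \notin nth set0 c k.
Proof.
case=> _ h0 _ hs; elim=> [_|k IH hk].
  rewrite h0; apply/imsetP => -[i _ /setP/(_ i)]; by rewrite !inE eqxx.
have [A [B [hA hB _ ->]]] := hs k hk.
have := IH (ltnW hk); rewrite !in_setU1 !in_setD1 => h; apply/negP => /orP[/eqP e|/and3P[_ _ h']].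
  have : A \subset set0 by rewrite e subsetUl.
  by rewrite subset0 => /eqP eA; rewrite -eA hA in h.
by rewrite h' in h.
Qed.

Lemma label_le_n n (c : seq {set {set 'I_n}}) : maximal_chain c -> forall k, k.+1 < n -> edge_label c k <= n.
Proof.
move=> mc k hk; apply/bigmax_leqP => X; rewrite inE => /andP[_ XP].
apply: minb_le; apply/eqP => X0; move: XP; rewrite X0.
by move: (nonempty_chain mc (ltnW hk)) => /negbTE->.
Qed.

Lemma label_bound n (c : seq {set {set 'I_n}}) : maximal_chain c -> increasing_chain c ->
  forall k, k.+1 < n -> edge_label c k <= k.+2.
Proof.
move=> mc ic k hk.
have gen d : k + d + 1 < n -> edge_label c k + d <= edge_label c (k + d).
  elim: d => [|d IH] h; first by rewrite !addn0.
  have := IH ltac:(lia).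
  have := ic (k + d); rewrite addnS => hic hih.
  rewrite addnS; apply: leq_ltn_trans hih (hic _); lia.
have e : k + (n - k - 2) = n.-2 by lia.
have := gen (n - k - 2); rewrite e; have := label_le_n mc (k := n.-2).
lia.
Qed.

Lemma chain_Pk n (hn : 0 < n) (c : seq {set {set 'I_n}}) : maximal_chain c -> increasing_chain c ->
  forall k, k < n -> nth set0 c k = Pk n k.
Proof.
move=> mc ic; have [_ h0 _ hs] := mc; elim=> [_|k IH hk]; first by rewrite h0 Pk0.
have lb := label_bound mc ic hk.
have [A [B [hA hB AB eQ]]] := hs k hk.
move: (IH (ltnW hk)) => IHk; rewrite IHk in hA hB eQ.
have nA := merge_nondeg hn hA hB AB.
have nB : B != A :|: B by rewrite setUC; apply: (merge_nondeg hn hB hA); rewrite eq_sym.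
move: lb; rewrite /edge_label IHk eQ diff_merge // max2 // geq_max => /andP[lA lB].
set j : 'I_n := Ordinal hk.
have hj : val j = k.+1 by [].
move/inPkP: hA => [eA|[i ki eA]]; move/inPkP: hB => [eB|[i' ki' eB]].
- by rewrite eA eB eqxx in AB.
- have ij : i' = j by apply: val_inj; move: lB; rewrite eB minb1 /=; lia.
  by rewrite eA eB ij merge_Pk.
- have ij : i = j by apply: val_inj; move: lA; rewrite eA minb1 /=; lia.
  by rewrite eA eB ij (setUC [set j] (pre n k)) setDDl (setUC [set [set j]] [set pre n k]) -setDDl merge_Pk.
- have ij : i = i' by apply: val_inj; move: lA lB; rewrite eA eB !minb1 /=; lia.
  by rewrite eA eB ij eqxx in AB.
Qed.

Lemma diff_Pk n k (hk : k.+1 < n) :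
  Pk n k :\: Pk n k.+1 = [set pre n k; [set Ordinal hk]].
Proof.
have hn : 0 < n by apply: leq_trans hk.
have hA := pre_in n k.
have hB : [set Ordinal hk] \in Pk n k by apply: single_in.
have AB : pre n k != [set Ordinal hk] by apply: pre_neq.
have nA := merge_nondeg hn hA hB AB.
have nB : [set Ordinal hk] != pre n k :|: [set Ordinal hk].
  by rewrite setUC; apply: (merge_nondeg hn hB hA); rewrite eq_sym.
by rewrite -(merge_Pk (j := Ordinal hk)) // diff_merge.
Qed.

Lemma label_Pk n (c : seq {set {set 'I_n}}) (H : forall k, k < n -> nth set0 c k = Pk n k)
  k : k.+1 < n -> edge_label c k = k.+2.
Proof.
move=> hk; have hn : 0 < n by apply: leq_trans hk.
rewrite /edge_label H ?H // 1?ltnW // diff_Pk max2 ?minb_pre ?minb1 //.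
exact: pre_neq.
Qed.

Lemma tree_single n (c : seq {set {set 'I_n}}) (H : forall k, k < n -> nth set0 c k = Pk n k)
  k (i : 'I_n) : k < i -> tree_at c k [set i] = Leaf i.+1.
Proof.
elim: k => [_|k IH ki] /=; first by rewrite minb1.
rewrite H; last by have := ltn_ord i; lia.
by rewrite single_in ?IH // ltnW.
Qed.

Lemma tree_pre n (hn : 0 < n) (c : seq {set {set 'I_n}})
  (H : forall k, k < n -> nth set0 c k = Pk n k)
  k : k < n -> tree_at c k (pre n k) = leftcomb k.+1.
Proof.
elim: k => [_|k IH hk] /=; first by rewrite minb_pre.
set j : 'I_n := Ordinal hk.
have hj : val j = k.+1 by [].
have hA := pre_in n k.
have hB : [set j] \in Pk n k by apply: single_in.
have AB : pre n k != [set j] by apply: pre_neq.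
rewrite H ?(ltnW hk) // -(pre_succ hj) (negbTE (union_notin hn hA hB AB)).
rewrite H // diff_Pk.
have ts : tree_at c k [set j] = Leaf k.+2 by rewrite tree_single.
case: (enum2 AB) => ->; rewrite minb_pre // minb1 /= ts IH ?(ltnW hk) //.
Qed.

Lemma tree_chain n (hn : 0 < n) (c : seq {set {set 'I_n}})
  (H : forall k, k < n -> nth set0 c k = Pk n k) : chain_tree c = leftcomb n.
Proof.
rewrite /chain_tree.
have -> : [set: 'I_n] = pre n n.-1 by apply/setP => i; rewrite !inE -ltnS prednK ?ltn_ord.
by rewrite tree_pre ?prednK // ltn_predL.
Qed.

Theorem mainTheorem5 (n : nat) (hn : 0 < n) (t : tree) :
  pbw_basis n t <-> t = leftcomb n.
Proof.
split.
  case=> c [mc ic <-]; apply: tree_chain => //; exact: chain_Pk.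
move=> ->.
have H : forall k, k < n -> nth set0 (mkseq (Pk n) n) k = Pk n k.
  by move=> k hk; rewrite nth_mkseq.
exists (mkseq (Pk n) n); split.
- split; first by rewrite size_mkseq.
  + by rewrite H // Pk0.
  + by rewrite H ?Pklast // ltn_predL.
  + move=> k hk; rewrite !H // 1?ltnW //.
    exists (pre n k), [set Ordinal hk]; split.
    * exact: pre_in.
    * exact: single_in.
    * exact: pre_neq.
    * by rewrite merge_Pk.
- move=> k hk; rewrite !label_Pk // ltnW //.
- exact: tree_chain.
Qed.
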